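(* Under the standing assumptions (A1)–(A4) below, for every $A\in\mathbb{R}^{k\times d}$ with rows $a_1,\dots,a_k$, $$L_4(A)=\sum_{m\in[k]}\mathbb{E}[p_m^\ast(x)]\sum_{i\ne j}\langle a_m^\ast,a_i\rangle^2\langle a_m^\ast,a_j\rangle^2-\mu\sum_{m,i\in[k]}\mathbb{E}[p_m^\ast(x)]\langle a_m^\ast,a_i\rangle^4+\lambda\sum_{i\in[k]}\Big(\sum_{m\in[k]}\mathbb{E}[p_m^\ast(x)]\langle a_m^\ast,a_i\rangle^2-1\Big)^2+\frac{\delta}{2}\|A\|_F^2.$$
   Context: Mixture-of-experts model: $k\ge2$, $d$; input $x\in\mathbb{R}^d$; regressors $a_1^\ast,\dots,a_k^\ast$; gating parameters $w_1^\ast,\dots,w_{k-1}^\ast$, $w_k^\ast=0$; activation $g:\mathbb{R}\to\mathbb{R}$; noise $\sigma>0$. Output $y=\sum_iz_ig(\langle a_i^\ast,x\rangle)+\xi$, $\xi\sim\mathcal N(0,\sigma^2)$ independent of $x$, $z$ one-hot with $\Pr(z_i=1|x)=p_i^\ast(x):=e^{\langle w_i^\ast,x\rangle}/\sum_je^{\langle w_j^\ast,x\rangle}$. Valid non-linearity: with $Z\sim\mathcal N(0,1)$, $Y|Z\sim\mathcal N(g(Z),\sigma^2)$, $\mathcal Q_4(y)=y^4+\alpha y^3+\beta y^2+\gamma y$, $\mathcal Q_2(y)=y^2+\delta'y$, $h_4(Z)=\mathbb{E}[\mathcal Q_4(Y)|Z]$, $h_2(Z)=\mathbb{E}[\mathcal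 Q_2(Y)|Z]$: $g$ is valid if for some $(\alpha,\beta,\gamma,\delta')$, $\mathbb{E}[h_4Z]=\mathbb{E}[h_4(Z^2-1)]=\mathbb{E}[h_4(Z^3-3Z)]=0\ne\mathbb{E}[h_4(Z^4-6Z^2+3)]$ and $\mathbb{E}[h_2Z]=0\ne\mathbb{E}[h_2(Z^2-1)]$; $\mathcal Q_4,\mathcal Q_2$ use this tuple. Standing assumptions: (A1) $x\sim\mathcal N(0,I_d)$; (A2) $\|a_i^\ast\|=1$, $\|w_i^\ast\|\le R$; (A3) $a_i^\ast$ linearly independent, $w_i^\ast$ orthogonal to their span, $2k-1<d$; (A4) $g$ valid. Let $c_{g,\sigma},c'_{g,\sigma}$ be the nonzero constants with $\mathbb{E}[\mathcal Q_4(y)\mathcal S_4(x)]=c_{g,\sigma}\sum_i\mathbb{E}[p_i^\ast(x)](a_i^\ast)^{\otimes4}$ and $\mathbb{E}[\mathcal Q_2(y)\mathcal S_2(x)]=c'_{g,\sigma}\sum_i\mathbb{E}[p_i^\ast(x)](a_i^\ast)^{\otimes2}$, where $\mathcal S_m(x)=\nabla_x^mf(x)/f(x)$, $f$ the standard Gaussian density. Define $t_3(u,x)=((u^\top x)^2-\|u\|^2)/c'_{g,\sigma}$, $t_2(u,x)=((u^\top x)^4-6\|u\|^2(u^\top x)^2+3\|u\|^4)/c_{g,\sigma}$, $t_1(u,v,x)=((u^\top x)^2(v^\top x)^2-\|u\|^2(v^\top x)^2-4(u^\top x)(v^\top x)(u^\top v)-\|v\|^2(u^\top x)^2+\|u\|^2\|v\|^2+2(u^\top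 v)^2)/c_{g,\sigma}$, and for constants $\mu,\lambda,\delta>0$: $L_4(A)=\sum_{i\ne j}\mathbb{E}[\mathcal Q_4(y)t_1(a_i,a_j,x)]-\mu\sum_i\mathbb{E}[\mathcal Q_4(y)t_2(a_i,x)]+\lambda\sum_i(\mathbb{E}[\mathcal Q_2(y)t_3(a_i,x)]-1)^2+\frac{\delta}{2}\|A\|_F^2$. *)

(* Defs.v *)
From HB Require Import structures.
From mathcomp Require Import all_boot all_order all_algebra.
From mathcomp Require Import all_classical all_reals all_analysis.
Set Implicit Arguments. Unset Strict Implicit. Unset Printing Implicit Defensive.
Import Order.TTheory GRing.Theory Num.Theory.
Import numFieldNormedType.Exports.
Local Open Scope classical_set_scope.
Local Open Scope ring_scope.

Section MoE.
Variable R : realType.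

Definition dotv (d : nat) (u v : 'rV[R]_d) : R := \sum_(j < d) u 0 j * v 0 j.
Definition sqnorm (d : nat) (u : 'rV[R]_d) : R := dotv u u.

Definition frob2 (k d : nat) (A : 'M[R]_(k, d)) : R :=
  \sum_(i < k) \sum_(j < d) A i j ^+ 2.

Definition softmax (k d : nat) (w : 'I_k -> 'rV[R]_d) (i : 'I_k) (x : 'rV[R]_d) : R :=
  expR (dotv (w i) x) / \sum_(j < k) expR (dotv (w j) x).

Definition Q4 (alpha beta gamma y : R) : R :=
  y ^+ 4 + alpha * y ^+ 3 + beta * y ^+ 2 + gamma * y.
Definition Q2 (delta' y : R) : R := y ^+ 2 + delta' * y.

(* h(z) = E[Q(Y) | Z = z] where Y | Z=z ~ N(g z, sigma^2)
   (normal_prob m s is the normal law with mean m and standard deviation s) *)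
Definition hcond (Q : R -> R) (g : R -> R) (sigma z : R) : \bar R :=
  (\int[normal_prob (g z) sigma]_y (Q y)%:E)%E.

Definition Egauss (h : R -> \bar R) (q : R -> R) : \bar R :=
  (\int[normal_prob (0 : R) 1]_z (h z * (q z)%:E))%E.

Definition valid_with (g : R -> R) (sigma alpha beta gamma delta' : R) : Prop :=
  let h4 := hcond (Q4 alpha beta gamma) g sigma in
  let h2 := hcond (Q2 delta') g sigma in
  [/\ Egauss h4 (fun z => z) = 0%E /\
      Egauss h4 (fun z => z ^+ 2 - 1) = 0%E,
      Egauss h4 (fun z => z ^+ 3 - 3 * z) = 0%E,
      Egauss h4 (fun z => z ^+ 4 - 6 * z ^+ 2 + 3) != 0%E,
      Egauss h2 (fun z => z) = 0%E &
      Egauss h2 (fun z => z ^+ 2 - 1) != 0%E].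

Definition valid (g : R -> R) (sigma : R) : Prop :=
  exists alpha beta gamma delta', valid_with g sigma alpha beta gamma delta'.

Definition gauss_density (d : nat) (x : 'rV[R]_d) : R :=
  (Num.sqrt (pi *+ 2))^-1 ^+ d * expR (- (sqnorm x / 2)).

Fixpoint dders (d : nat) (l : seq 'rV[R]_d) (f : 'rV[R]_d -> R) : 'rV[R]_d -> R :=
  match l with
  | [::] => f
  | v :: l' => fun x => derive (dders l' f) x v
  end.

Definition evec (d : nat) (j : 'I_d) : 'rV[R]_d := delta_mx 0 j.

(* component (j_1,...,j_m) of the score tensor S_m(x) = nabla^m f(x) / f(x) *)
Definition score (d : nat) (J : seq 'I_d) (x : 'rV[R]_d) : R :=
  dders [seq evec j | j <- J] (@gauss_density d) x / gauss_density x.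

(* The mixture-of-experts data model on a probability space (Omega, P):
   X : Omega -> R^d the input, Zc : Omega -> 'I_k the index of the active
   expert (z = e_{Zc}), xi the noise.  The joint law is pinned down on
   measurable rectangles:  x ~ N(0, I_d);  Pr(Zc = i | x) = p_i^*(x);
   xi ~ N(0, sigma^2) independent of (x, z). *)
Definition moe_model (k d : nat) (dO : measure_display) (Omega : measurableType dO)
  (P : probability Omega R) (X : Omega -> 'rV[R]_d) (Zc : Omega -> 'I_k)
  (xi : Omega -> R) (wstar : 'I_k -> 'rV[R]_d) (sigma : R) : Prop :=
  [/\ (forall j : 'I_d, measurable_fun setT (fun w => X w ord0 j)),
      (forall i : 'I_k, measurable (Zc @^-1` [set i])),
      measurable_fun setT xi,
      (forall B : 'I_d -> set R, (forall j, measurable (B j)) ->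
         P [set w | forall j : 'I_d, B j (X w ord0 j)]
         = (\prod_(j < d) normal_prob (0 : R) 1 (B j))%E) &
      (forall (B : 'I_d -> set R) (C : set R) (i : 'I_k),
         (forall j, measurable (B j)) -> measurable C ->
         P [set w | (forall j : 'I_d, B j (X w ord0 j)) /\ Zc w = i /\ C (xi w)]
         = (\int[P]_(w in [set w | forall j : 'I_d, B j (X w ord0 j)])
               (softmax wstar i (X w))%:E * normal_prob (0 : R) sigma C)%E)].

Definition moe_y (k d : nat) (Omega : Type) (X : Omega -> 'rV[R]_d) (Zc : Omega -> 'I_k)
  (xi : Omega -> R) (astar : 'I_k -> 'rV[R]_d) (g : R -> R) (w : Omega) : R :=
  \sum_(i < k) (Zc w == i)%:R * g (dotv (astar i) (X w)) + xi w.

Definition Ex (dO : measure_display) (Omega : measurableType dO)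
  (P : probability Omega R) (F : Omega -> R) : R :=
  fine (\int[P]_w (F w)%:E)%E.

Definition t3 (c' : R) (d : nat) (u x : 'rV[R]_d) : R :=
  (dotv u x ^+ 2 - sqnorm u) / c'.
Definition t2 (c : R) (d : nat) (u x : 'rV[R]_d) : R :=
  (dotv u x ^+ 4 - 6 * sqnorm u * dotv u x ^+ 2 + 3 * sqnorm u ^+ 2) / c.
Definition t1 (c : R) (d : nat) (u v x : 'rV[R]_d) : R :=
  (dotv u x ^+ 2 * dotv v x ^+ 2 - sqnorm u * dotv v x ^+ 2
   - 4 * dotv u x * dotv v x * dotv u v - sqnorm v * dotv u x ^+ 2
   + sqnorm u * sqnorm v + 2 * dotv u v ^+ 2) / c.

Definition L4 (k d : nat) (dO : measure_display) (Omega : measurableType dO)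
  (P : probability Omega R) (X : Omega -> 'rV[R]_d) (Zc : Omega -> 'I_k)
  (xi : Omega -> R) (astar : 'I_k -> 'rV[R]_d) (g : R -> R)
  (alpha beta gamma delta' c c' mu lambda delta : R) (A : 'M[R]_(k, d)) : R :=
  let y := moe_y X Zc xi astar g in
  \sum_(i < k) \sum_(j < k | j != i)
     Ex P (fun w => Q4 alpha beta gamma (y w) * t1 c (row i A) (row j A) (X w))
  - mu * \sum_(i < k) Ex P (fun w => Q4 alpha beta gamma (y w) * t2 c (row i A) (X w))
  + lambda * \sum_(i < k)
       (Ex P (fun w => Q2 delta' (y w) * t3 c' (row i A) (X w)) - 1) ^+ 2
  + delta / 2 * frob2 A.

End MoE.

(* Main.v *)
Require Import Defs.
From HB Require Import structures.
From mathcomp Require Import all_boot all_order all_algebra.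
From mathcomp Require Import all_classical all_reals all_analysis.
From mathcomp Require Import ring lra.
From mathcomp Require Import measurable_realfun.
Import Order.TTheory GRing.Theory Num.Theory.
Import numFieldNormedType.Exports.
Local Open Scope classical_set_scope.
Local Open Scope ring_scope.

Set Implicit Arguments. Unset Strict Implicit. Unset Printing Implicit Defensive.

Section Deriv.
Variable R : realType.
Variable d : nat.
Implicit Types (u v w x p q r s : 'rV[R]_d).

Lemma dotvC u v : dotv u v = dotv v u.
Proof. by apply: eq_bigr => j _; rewrite mulrC. Qed.

Lemma dotvDr u v w (a : R) : dotv u (a *: v + w) = a * dotv u v + dotv u w.
Proof.
rewrite /dotv mulr_sumr -big_split; apply: eq_bigr => j _ /=.
by rewrite !mxE mulrDr mulrCA.
Qed.

Lemma derive_1d (f : 'rV[R]_d -> R) x v :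
  'D_v f x = 'D_1 (fun t : R => f (t *: v + x)) 0.
Proof.
rewrite /derive /=.
set g1 := (fun h : R => _); set g2 := (fun h : R => _).
suff -> : g1 = g2 by [].
by apply/funext => h; rewrite /g1 /g2 /= addr0 scale0r add0r [_%:A]mulr1.
Qed.

Lemma is_derive_1d (f : 'rV[R]_d -> R) x v df :
  is_derive (0:R) 1 (fun t : R => f (t *: v + x)) df -> is_derive x v f df.
Proof.
case=> H1 H2; apply: DeriveDef; first exact/derivable1P.
by rewrite derive_1d.
Qed.

Lemma is_derive_ext (f g : R -> R) (x v df : R) :
  f =1 g -> is_derive x v f df -> is_derive x v g df.
Proof. by move=> /funext ->. Qed.

Lemma is_derive_lin (a b : R) : is_derive (0:R) 1 (fun t : R => a * t + b) a.
Proof.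
have := is_deriveD (is_deriveZ a (@is_derive_id _ _ (0:R) 1)) (is_derive_cst b (0:R) 1).
move=> H; apply: (is_derive_eq H).
by rewrite addr0 /GRing.scale /= mulr1.
Qed.

Lemma is_derive_dot p x v : is_derive x v (fun y => dotv p y) (dotv p v).
Proof.
apply: is_derive_1d; apply: (@is_derive_ext _ _ _ _ _ _ (is_derive_lin _ _)).
by move=> t; rewrite dotvDr mulrC.
Qed.

End Deriv.
Section Deriv2.
Variable R : realType.
Variable d : nat.
Implicit Types (u v w x p q r s : 'rV[R]_d).

Lemma is_derive_expc (q : R -> R) dq : is_derive (0:R) 1 q dq ->
  is_derive (0:R) 1 (fun t => expR (q t)) (expR (q 0) * dq).
Proof.
move=> Hq.
have dq' : derivable q 0 1 by exact: ex_derive.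
have de : derivable expR (q 0) 1 by exact: derivable_expR.
apply: DeriveDef.
  apply/derivable1_diffP; apply: (@differentiable_comp _ _ _ _ q expR).
    exact/derivable1_diffP.
  exact/derivable1_diffP.
rewrite -derive1E.
have := derive1_comp dq' de; rewrite /comp => ->.
by rewrite !derive1E !derive_val.
Qed.

Lemma sqnormD v x (t : R) :
  sqnorm (t *: v + x) = t * t * sqnorm v + 2 * t * dotv v x + sqnorm x.
Proof.
rewrite /sqnorm dotvDr ![dotv (_ *: _ + _) _]dotvC !dotvDr (dotvC x v).
ring.
Qed.

Lemma is_derive_quad (a b e : R) :
  is_derive (0:R) 1 (fun t : R => a * (t * t) + b * t + e) b.
Proof.
have H := is_deriveD (is_deriveD (is_deriveZ a (is_deriveM (@is_derive_id _ _ (0:R) 1) (@is_derive_id _ _ (0:R) 1)))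
   (is_deriveZ b (@is_derive_id _ _ (0:R) 1))) (is_derive_cst e (0:R) 1).
apply: (is_derive_eq H).
rewrite /GRing.scale /=; ring.
Qed.

Lemma is_derive_gd x v :
  is_derive x v (@gauss_density R d) (- dotv v x * gauss_density x).
Proof.
apply: is_derive_1d.
pose K : R := (Num.sqrt (pi *+ 2 : R))^-1 ^+ d.
have H := is_deriveZ K (is_derive_expc (is_derive_quad (- (sqnorm v / 2)) (- dotv v x) (- (sqnorm x / 2)))).
apply: (is_derive_eq (@is_derive_ext _ _ _ _ _ _ _ H)).
  move=> t; rewrite /gauss_density /= sqnormD /GRing.scale /=; congr (_ * expR _).
  by field.
rewrite /gauss_density -/K.
have -> : - (sqnorm v / 2) * (0 * 0) + - dotv v x * 0 - sqnorm x / 2 = - (sqnorm x / 2) by ring.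
rewrite /GRing.scale /=; ring.
Qed.

End Deriv2.
Section Deriv3.
Variable R : realType.
Variable d : nat.
Implicit Types (u v w x p q r s y : 'rV[R]_d).
Local Notation gd := (@gauss_density R d).

Lemma dval (f : 'rV[R]_d -> R) x v df : is_derive x v f df -> 'D_v f x = df.
Proof. by case. Qed.

Lemma Dstep (P : 'rV[R]_d -> R) x v dP : is_derive x v P dP ->
  'D_v (fun y => P y * gd y) x = (dP - dotv v x * P x) * gd x.
Proof.
move=> HP.
have := dval (is_deriveM HP (is_derive_gd x v)).
rewrite (_ : (fun y => P y * gd y) = P * gd) // => ->.
rewrite /GRing.scale /=; ring.
Qed.

Definition h1 p y := - dotv p y.
Definition h2 p q y := dotv p y * dotv q y - dotv p q.
Definition h3 p q r y := - (dotv p y * dotv q y * dotv r y) + dotv p q * dotv r y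
  + dotv p r * dotv q y + dotv q r * dotv p y.
Definition h4 p q r s y := dotv p y * dotv q y * dotv r y * dotv s y
  - (dotv p q * dotv r y * dotv s y + dotv p r * dotv q y * dotv s y
     + dotv p s * dotv q y * dotv r y + dotv q r * dotv p y * dotv s y
     + dotv q s * dotv p y * dotv r y + dotv r s * dotv p y * dotv q y)
  + dotv p q * dotv r s + dotv p r * dotv q s + dotv p s * dotv q r.

Lemma is_derive_h1 p x v : is_derive x v (h1 p) (- dotv p v).
Proof. exact: (is_deriveN (is_derive_dot p x v)). Qed.

Lemma is_derive_h2 p q x v :
  is_derive x v (h2 p q) (dotv p x * dotv q v + dotv q x * dotv p v).
Proof.
have H := is_deriveB (is_deriveM (is_derive_dot p x v) (is_derive_dot q x v))
   (is_derive_cst (dotv p q) x v).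
apply: (is_derive_eq H).
rewrite /GRing.scale /=; ring.
Qed.

Lemma is_derive_h3 p q r x v :
  is_derive x v (h3 p q r)
   (- (dotv p x * dotv q x * dotv r v + dotv r x * (dotv p x * dotv q v + dotv q x * dotv p v))
    + dotv p q * dotv r v + dotv p r * dotv q v + dotv q r * dotv p v).
Proof.
have Dp := is_derive_dot p x v; have Dq := is_derive_dot q x v;
have Dr := is_derive_dot r x v.
have H := is_deriveD (is_deriveD (is_deriveD (is_deriveN (is_deriveM (is_deriveM Dp Dq) Dr))
   (is_deriveZ (dotv p q) Dr)) (is_deriveZ (dotv p r) Dq)) (is_deriveZ (dotv q r) Dp).
apply: (is_derive_eq H).
by [].
Qed.

Lemma dders1 v : dders [:: v] gd = fun y => h1 v y * gd y.
Proof.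
apply/funext => y /=; rewrite (dval (is_derive_gd y v)) /h1; ring.
Qed.

Lemma dders2 v w : dders [:: v; w] gd = fun y => h2 v w y * gd y.
Proof.
apply/funext => y.
change (derive (dders [:: w] gd) y v = h2 v w y * gd y).
rewrite dders1 (Dstep (is_derive_h1 w y v)) /h1 /h2 (dotvC w v); ring.
Qed.

Lemma dders3 v w r : dders [:: v; w; r] gd = fun y => h3 v w r y * gd y.
Proof.
apply/funext => y.
change (derive (dders [:: w; r] gd) y v = h3 v w r y * gd y).
rewrite dders2 (Dstep (is_derive_h2 w r y v)) /h2 /h3 (dotvC w v) (dotvC r v); ring.
Qed.

Lemma dders4 v w r s : dders [:: v; w; r; s] gd = fun y => h4 v w r s y * gd y.
Proof.
apply/funext => y.
change (derive (dders [:: w; r; s] gd) y v = h4 v w r s y * gd y).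
rewrite dders3 (Dstep (is_derive_h3 w r s y v)) /h3 /h4 (dotvC w v) (dotvC r v) (dotvC s v); ring.
Qed.

Lemma gd_gt0 y : 0 < gd y.
Proof.
rewrite /gauss_density mulr_gt0 ?expR_gt0 // exprn_gt0 // invr_gt0 sqrtr_gt0.
by rewrite pmulrn_rgt0 // pi_gt0.
Qed.

Lemma score2 a b y : score [:: a; b] y = h2 (@evec R _ a) (@evec R _ b) y.
Proof.
rewrite /score; change (dders [:: evec R a; evec R b] gd y / gd y = h2 (evec R a) (evec R b) y).
by rewrite dders2 mulfK // gt_eqF // gd_gt0.
Qed.

Lemma score4 a b e f y :
  score [:: a; b; e; f] y = h4 (@evec R _ a) (@evec R _ b) (@evec R _ e) (@evec R _ f) y.
Proof.
rewrite /score; change (dders [:: evec R a; evec R b; evec R e; evec R f] gd y / gd y = h4 (evec R a) (evec R b) (evec R e) (evec R f) y).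
by rewrite dders4 mulfK // gt_eqF // gd_gt0.
Qed.

End Deriv3.


Section Contract.
Variable R : realType.
Variable d : nat.
Implicit Types (u v w x p q r s y W : 'rV[R]_d).
Local Notation e := (@evec R d).

Lemma dot_evec j W : dotv (e j) W = W 0 j.
Proof.
rewrite /dotv (bigD1 j) //= /evec !mxE !eqxx mul1r big1 ?addr0 // => i /negPf ij.
by rewrite !mxE eqxx /= ij mul0r.
Qed.

Lemma contract1 (F : 'rV[R]_d -> R) W v : (forall s, F s = dotv s W) ->
  \sum_(j < d) v 0 j * F (e j) = F v.
Proof.
move=> HF; rewrite HF /dotv; apply: eq_bigr => j _.
by rewrite HF dot_evec.
Qed.

Lemma dotvD4 s y p q r (a b c f : R) :
  dotv s (a *: y + b *: p + c *: q + f *: r) =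
  a * dotv s y + b * dotv s p + c * dotv s q + f * dotv s r.
Proof.
rewrite /dotv !mulr_sumr -!big_split; apply: eq_bigr => j _ /=.
rewrite !mxE; ring.
Qed.

Definition nest4 u v (G : 'I_d -> 'I_d -> 'I_d -> 'I_d -> R) :=
  \sum_(a < d) u 0 a * \sum_(b < d) u 0 b * \sum_(c < d) v 0 c *
     \sum_(f < d) v 0 f * G a b c f.

Definition nest2 u (G : 'I_d -> 'I_d -> R) :=
  \sum_(a < d) u 0 a * \sum_(b < d) u 0 b * G a b.

Lemma chain4 (F : 'rV[R]_d -> 'rV[R]_d -> 'rV[R]_d -> 'rV[R]_d -> R) u v :
  (forall p q r, exists W, forall s, F p q r s = dotv s W) ->
  (forall p q r s, F p q r s = F s p q r) ->
  nest4 u v (fun a b c f => F (e a) (e b) (e c) (e f)) = F u v v u.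
Proof.
move=> Hl Hs; rewrite /nest4.
have L p q r s0 : \sum_(f < d) s0 0 f * F p q r (e f) = F s0 p q r.
  have [W HW] := Hl p q r; by rewrite (contract1 _ HW) Hs.
under eq_bigr => a _ do under eq_bigr => b _ do under eq_bigr => c _ do rewrite L.
under eq_bigr => a _ do under eq_bigr => b _ do rewrite L.
under eq_bigr => a _ do rewrite L.
by rewrite L.
Qed.

Lemma chain2 (F : 'rV[R]_d -> 'rV[R]_d -> R) u :
  (forall p, exists W, forall s, F p s = dotv s W) ->
  (forall p s, F p s = F s p) ->
  nest2 u (fun a b => F (e a) (e b)) = F u u.
Proof.
move=> Hl Hs; rewrite /nest2.
have L p s0 : \sum_(f < d) s0 0 f * F p (e f) = F s0 p.
  have [W HW] := Hl p; by rewrite (contract1 _ HW) Hs.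
under eq_bigr => a _ do rewrite L.
by rewrite L.
Qed.

Lemma h4_lin p q r y : exists W, forall s, h4 p q r s y = dotv s W.
Proof.
exists ((dotv p y * dotv q y * dotv r y - (dotv p q * dotv r y + dotv p r * dotv q y
          + dotv q r * dotv p y)) *: y
        + (dotv q r - dotv q y * dotv r y) *: p
        + (dotv p r - dotv p y * dotv r y) *: q
        + (dotv p q - dotv p y * dotv q y) *: r) => s.
rewrite dotvD4 /h4 (dotvC s p) (dotvC s q) (dotvC s r) (dotvC s y); ring.
Qed.

Lemma h4_sym p q r s y : h4 p q r s y = h4 s p q r y.
Proof. rewrite /h4 (dotvC s p) (dotvC s q) (dotvC s r); ring. Qed.

Lemma h2_lin p y : exists W, forall s, h2 p s y = dotv s W.
Proof.
exists (dotv p y *: y + (-1) *: p + 0 *: p + 0 *: p) => s.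
rewrite dotvD4 /h2 (dotvC s p) (dotvC s y); ring.
Qed.

Lemma h2_sym p s y : h2 p s y = h2 s p y.
Proof. rewrite /h2 (dotvC s p); ring. Qed.

Lemma h4_t1 (c : R) u v y : c != 0 -> t1 c u v y = c^-1 * h4 u v v u y.
Proof.
move=> c0; rewrite /t1 /h4 /sqnorm (dotvC v u).
rewrite mulrC; congr (_ * _). ring.
Qed.

Lemma h2_t3 (c : R) u y : c != 0 -> t3 c u y = c^-1 * h2 u u y.
Proof. by move=> c0; rewrite /t3 /h2 /sqnorm mulrC expr2. Qed.

Lemma t2_t1 (c : R) u y : t2 c u y = t1 c u u y.
Proof. rewrite /t2 /t1 /sqnorm; congr (_ / _); ring. Qed.

Lemma dotv_sumr (k : nat) s (cf : 'I_k -> R) (As : 'I_k -> 'rV[R]_d) :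
  dotv s (\sum_(i < k) cf i *: As i) = \sum_(i < k) cf i * dotv s (As i).
Proof.
rewrite /dotv; under eq_bigr => j _ do rewrite summxE mulr_sumr.
rewrite exchange_big /=; apply: eq_bigr => i _; rewrite mulr_sumr.
by apply: eq_bigr => j _; rewrite mxE; ring.
Qed.

Definition m4 (k : nat) (E : 'I_k -> R) (As : 'I_k -> 'rV[R]_d) p q r s :=
  \sum_(i < k) E i * (dotv (As i) p * dotv (As i) q * dotv (As i) r * dotv (As i) s).
Definition m2 (k : nat) (E : 'I_k -> R) (As : 'I_k -> 'rV[R]_d) p q :=
  \sum_(i < k) E i * (dotv (As i) p * dotv (As i) q).

Lemma m4_lin k E As p q r : exists W, forall s, @m4 k E As p q r s = dotv s W.
Proof.
exists (\sum_(i < k) (E i * (dotv (As i) p * dotv (As i) q * dotv (As i) r)) *: As i) => s.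
rewrite dotv_sumr; apply: eq_bigr => i _; rewrite (dotvC s); ring.
Qed.

Lemma m4_sym k E As p q r s : @m4 k E As p q r s = m4 E As s p q r.
Proof. by apply: eq_bigr => i _; ring. Qed.

Lemma m2_lin k E As p : exists W, forall s, @m2 k E As p s = dotv s W.
Proof.
exists (\sum_(i < k) (E i * dotv (As i) p) *: As i) => s.
rewrite dotv_sumr; apply: eq_bigr => i _; rewrite (dotvC s); ring.
Qed.

Lemma m2_sym k E As p s : @m2 k E As p s = m2 E As s p.
Proof. by apply: eq_bigr => i _; ring. Qed.

Lemma m4_evec k E As a b c f : @m4 k E As (e a) (e b) (e c) (e f) =
  \sum_(i < k) E i * (As i 0 a * As i 0 b * As i 0 c * As i 0 f).
Proof. by apply: eq_bigr => i _; rewrite !(dotvC (As i)) !dot_evec. Qed.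

Lemma m2_evec k E As a b : @m2 k E As (e a) (e b) =
  \sum_(i < k) E i * (As i 0 a * As i 0 b).
Proof. by apply: eq_bigr => i _; rewrite !(dotvC (As i)) !dot_evec. Qed.

Lemma nest4_mull (k : R) u v G :
  k * nest4 u v G = nest4 u v (fun a b c f => k * G a b c f).
Proof.
rewrite /nest4 mulr_sumr; apply: eq_bigr => a _; rewrite mulrCA mulr_sumr; congr (_ * _).
apply: eq_bigr => b _; rewrite mulrCA mulr_sumr; congr (_ * _).
apply: eq_bigr => c _; rewrite mulrCA mulr_sumr; congr (_ * _).
by apply: eq_bigr => f _; rewrite mulrCA.
Qed.

Lemma nest2_mull (k : R) u G :
  k * nest2 u G = nest2 u (fun a b => k * G a b).
Proof.
rewrite /nest2 mulr_sumr; apply: eq_bigr => a _; rewrite mulrCA mulr_sumr; congr (_ * _).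
by apply: eq_bigr => b _; rewrite mulrCA.
Qed.

End Contract.


Section Integ.
Variable R : realType.
Variable dO : measure_display.
Variable Omega : measurableType dO.
Variable P : probability Omega R.

Lemma fin_integrable (f : Omega -> \bar R) : measurable_fun setT f ->
  (\int[P]_w f w)%E \is a fin_num -> P.-integrable setT f.
Proof.
move=> mf fin; apply/integrableP; split => //.
rewrite (_ : (fun x => `|f x|%E) = (fun x => f^\+ x + f^\- x)%E); last exact: fune_abse.
rewrite ge0_integralD //; last 2 first.
- exact: measurable_funepos.
- exact: measurable_funeneg.
move: fin; rewrite [X in X \is a fin_num]integralE.
have h1 : (0 <= \int[P]_(x in setT) f^\+ x)%E by apply: integral_ge0.
have h2 : (0 <= \int[P]_(x in setT) f^\- x)%E by apply: integral_ge0.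
move: (\int[P]_(x in setT) f^\+ x)%E (\int[P]_(x in setT) f^\- x)%E h1 h2.
by move=> [a| |] [b| |] h1 h2 //= ; rewrite ?ltry.
Qed.

Definition good (F : Omega -> R) (r : R) :=
  measurable_fun setT F /\ (\int[P]_w (F w)%:E)%E = r%:E.

Lemma good_int F r : good F r -> P.-integrable setT (EFin \o F).
Proof.
case=> mF iF; apply: fin_integrable; first exact/measurable_EFinP.
by rewrite iF.
Qed.

Lemma good_scale (k : R) F r : good F r -> good (fun w => k * F w) (k * r).
Proof.
move=> gF; have [mF iF] := gF; split.
  by apply: measurable_funM => //; exact: measurable_cst.
under eq_integral do rewrite EFinM.
rewrite integralZl //; first by rewrite iF.
exact: (good_int gF).
Qed.

Lemma good_sum (n : nat) (F : 'I_n -> Omega -> R) (r : 'I_n -> R) :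
  (forall j, good (F j) (r j)) ->
  good (fun w => \sum_(j < n) F j w) (\sum_(j < n) r j).
Proof.
move=> gF; split.
  by apply: measurable_sum => j; case: (gF j).
under eq_integral do rewrite -sumEFin.
rewrite integral_sum //; last by move=> j; exact: good_int.
rewrite -sumEFin; apply: eq_bigr => j _; by case: (gF j).
Qed.

Lemma good_ext F G r : F =1 G -> good F r -> good G r.
Proof. by move=> /funext ->. Qed.

Lemma good_Ex F r : good F r -> Ex P F = r.
Proof. by case=> _ iF; rewrite /Ex iF. Qed.

Lemma good_nest4 (d : nat) (u v : 'rV[R]_d) (F : 'I_d -> 'I_d -> 'I_d -> 'I_d -> Omega -> R) r :
  (forall a b c f, good (F a b c f) (r a b c f)) ->
  good (fun w => nest4 u v (fun a b c f => F a b c f w)) (nest4 u v r).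
Proof.
move=> gF; apply: good_sum => a; apply: good_scale; apply: good_sum => b;
apply: good_scale; apply: good_sum => c; apply: good_scale; apply: good_sum => f.
exact: good_scale.
Qed.

Lemma good_nest2 (d : nat) (u : 'rV[R]_d) (F : 'I_d -> 'I_d -> Omega -> R) r :
  (forall a b, good (F a b) (r a b)) ->
  good (fun w => nest2 u (fun a b => F a b w)) (nest2 u r).
Proof.
move=> gF; apply: good_sum => a; apply: good_scale; apply: good_sum => b.
exact: good_scale.
Qed.

End Integ.


Section Meas.
Variable R : realType.
Variable dO : measure_display.
Variable Omega : measurableType dO.
Variables (k d : nat) (X : Omega -> 'rV[R]_d) (Zc : Omega -> 'I_k) (xi : Omega -> R).
Variables (astar : 'I_k -> 'rV[R]_d) (g : R -> R).
Hypothesis mX : forall j : 'I_d, measurable_fun setT (fun w => X w ord0 j).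
Hypothesis mZ : forall i : 'I_k, measurable (Zc @^-1` [set i]).
Hypothesis mxi : measurable_fun setT xi.
Hypothesis mg : measurable_fun setT g.

Lemma m_dot p : measurable_fun setT (fun w => dotv p (X w)).
Proof.
rewrite /dotv; apply: measurable_sum => j; apply: measurable_funM.
  exact: measurable_cst.
exact: mX.
Qed.

Lemma m_ind i : measurable_fun setT (fun w => ((Zc w == i)%:R : R)).
Proof.
rewrite (_ : (fun w => _) = \1_(Zc @^-1` [set i])); first exact: measurable_indic.
apply/funext => w; rewrite /indic; case: (boolP (Zc w == i)) => [/eqP e|ne].
  by rewrite mem_set.
by rewrite memNset //= => /eqP; rewrite (negbTE ne).
Qed.

Lemma m_y : measurable_fun setT (moe_y X Zc xi astar g).
Proof.
rewrite /moe_y; apply: measurable_funD => //; apply: measurable_sum => i.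
apply: measurable_funM; first exact: m_ind.
exact: measurableT_comp mg (m_dot _).
Qed.

Lemma m_Q4 (a b c : R) (f : Omega -> R) : measurable_fun setT f ->
  measurable_fun setT (fun w => Q4 a b c (f w)).
Proof.
move=> mf; rewrite /Q4.
repeat apply: measurable_funD; repeat apply: measurable_funM;
  try exact: measurable_cst; try exact: measurable_funX; exact: mf.
Qed.

Lemma m_Q2 (a : R) (f : Omega -> R) : measurable_fun setT f ->
  measurable_fun setT (fun w => Q2 a (f w)).
Proof.
move=> mf; rewrite /Q2.
repeat apply: measurable_funD; repeat apply: measurable_funM;
  try exact: measurable_cst; try exact: measurable_funX; exact: mf.
Qed.

Ltac mtac := repeat first [exact: measurable_cst | exact: m_dot |
   apply: measurable_funD | apply: measurable_funN | apply: measurable_funM].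

Lemma m_h4 p q r s : measurable_fun setT (fun w => h4 p q r s (X w)).
Proof. rewrite /h4; mtac. Qed.

Lemma m_h2 p q : measurable_fun setT (fun w => h2 p q (X w)).
Proof. rewrite /h2; mtac. Qed.

End Meas.

Unset Implicit Arguments. Set Strict Implicit. Set Printing Implicit Defensive.

Theorem theorem5 (R : realType) (k d : nat)
  (astar wstar : 'I_k -> 'rV[R]_d) (Rw : R) (g : R -> R) (sigma : R)
  (dO : measure_display) (Omega : measurableType dO) (P : probability Omega R)
  (X : Omega -> 'rV[R]_d) (Zc : Omega -> 'I_k) (xi : Omega -> R)
  (alpha beta gamma delta' c c' mu lambda delta : R) (A : 'M[R]_(k, d)) :
  (2 <= k)%N -> 0 < sigma ->
  (* (A1) + the data model *)
  moe_model P X Zc xi wstar sigma ->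
  (* (A2) *)
  (forall i, sqnorm (astar i) = 1) ->
  (forall i, Num.sqrt (sqnorm (wstar i)) <= Rw) ->
  (forall i : 'I_k, val i = k.-1 -> wstar i = 0) ->
  (* (A3) *)
  row_free (\matrix_(i < k) astar i) ->
  (forall i j, dotv (wstar i) (astar j) = 0) ->
  (2 * k - 1 < d)%N ->
  (* (A4), with the tuple used by Q4, Q2 *)
  measurable_fun setT g ->
  valid_with g sigma alpha beta gamma delta' ->
  (* the constants c_{g,sigma}, c'_{g,sigma} *)
  c != 0 -> c' != 0 ->
  (forall j1 j2 j3 j4 : 'I_d,
     (\int[P]_w (Q4 alpha beta gamma (moe_y X Zc xi astar g w)
                 * score [:: j1; j2; j3; j4] (X w))%:E)%E
     = (c * \sum_(i < k) Ex P (fun w => softmax wstar i (X w))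
            * (astar i 0 j1 * astar i 0 j2 * astar i 0 j3 * astar i 0 j4))%:E) ->
  (forall j1 j2 : 'I_d,
     (\int[P]_w (Q2 delta' (moe_y X Zc xi astar g w)
                 * score [:: j1; j2] (X w))%:E)%E
     = (c' * \sum_(i < k) Ex P (fun w => softmax wstar i (X w))
             * (astar i 0 j1 * astar i 0 j2))%:E) ->
  0 < mu -> 0 < lambda -> 0 < delta ->
  let Ep m := Ex P (fun w => softmax wstar m (X w)) in
  let ai i := row i A in
  L4 P X Zc xi astar g alpha beta gamma delta' c c' mu lambda delta A
  = \sum_(m < k) Ep m * \sum_(i < k) \sum_(j < k | j != i)
        (dotv (astar m) (ai i) ^+ 2 * dotv (astar m) (ai j) ^+ 2)
    - mu * \sum_(m < k) \sum_(i < k) Ep m * dotv (astar m) (ai i) ^+ 4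
    + lambda * \sum_(i < k) (\sum_(m < k) Ep m * dotv (astar m) (ai i) ^+ 2 - 1) ^+ 2
    + delta / 2 * frob2 A.

Proof.
move=> hk hs [mX mZ mxi HX HZ] _ _ _ _ _ _ mg _ c0 c'0 H4 H2 _ _ _ Ep ai.
pose y := moe_y X Zc xi astar g.
have my : measurable_fun setT y by apply: m_y.
pose E := fun i => Ex P (fun w => softmax wstar i (X w)).
have G4 : forall a b e f, good P
    (fun w => Q4 alpha beta gamma (y w) * h4 (evec R a) (evec R b) (evec R e) (evec R f) (X w))
    (c * m4 E astar (evec R a) (evec R b) (evec R e) (evec R f)).
  move=> a b e f; split.
    by apply: measurable_funM; [exact: m_Q4 | exact: m_h4].
  rewrite m4_evec -H4; apply: eq_integral => w _; by rewrite score4.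
have G2 : forall a b, good P
    (fun w => Q2 delta' (y w) * h2 (evec R a) (evec R b) (X w))
    (c' * m2 E astar (evec R a) (evec R b)).
  move=> a b; split.
    by apply: measurable_funM; [exact: m_Q2 | exact: m_h2].
  rewrite m2_evec -H2; apply: eq_integral => w _; by rewrite score2.
have T1 : forall u v, Ex P (fun w => Q4 alpha beta gamma (y w) * t1 c u v (X w))
    = m4 E astar u v v u.
  move=> u v.
  rewrite (good_Ex (good_ext _ (good_scale c^-1 (good_nest4 u v G4)))).
    rewrite -nest4_mull mulKf //.
    exact: (chain4 (F := fun p q r s => m4 E astar p q r s) u v (@m4_lin _ _ _ E astar)
       (@m4_sym _ _ _ E astar)).
  move=> w /=; rewrite h4_t1 //.
  rewrite -(chain4 (F := fun p q r s => h4 p q r s (X w)) u v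
      (fun p q r => h4_lin p q r (X w)) (fun p q r s => h4_sym p q r s (X w))).
  by rewrite mulrCA (nest4_mull (Q4 alpha beta gamma (y w))).
have T2 : forall u, Ex P (fun w => Q4 alpha beta gamma (y w) * t2 c u (X w))
    = m4 E astar u u u u.
  move=> u; rewrite -T1; congr Ex; apply/funext => w; by rewrite t2_t1.
have T3 : forall u, Ex P (fun w => Q2 delta' (y w) * t3 c' u (X w))
    = m2 E astar u u.
  move=> u.
  rewrite (good_Ex (good_ext _ (good_scale c'^-1 (good_nest2 u G2)))).
    rewrite -nest2_mull mulKf //.
    exact: (chain2 (F := fun p q => m2 E astar p q) u (@m2_lin _ _ _ E astar)
       (@m2_sym _ _ _ E astar)).
  move=> w /=; rewrite h2_t3 //.
  rewrite -(chain2 (F := fun p q => h2 p q (X w)) u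
      (fun p => h2_lin p (X w)) (fun p s => h2_sym p s (X w))).
  by rewrite mulrCA (nest2_mull (Q2 delta' (y w))).
rewrite /L4 -/y.
under eq_bigr do under eq_bigr do rewrite T1.
under [X in _ - mu * X]eq_bigr do rewrite T2.
under [X in lambda * X]eq_bigr do rewrite T3.
rewrite /Ep /ai /E /m4 /m2.
congr (_ - _ * _ + _ * _ + _).
- under eq_bigr => i _ do rewrite exchange_big.
  rewrite exchange_big; apply: eq_bigr => m _ /=; rewrite mulr_sumr.
  apply: eq_bigr => i _; rewrite mulr_sumr; apply: eq_bigr => j _; ring.
- rewrite exchange_big; apply: eq_bigr => m _; apply: eq_bigr => i _; ring.
Qed.
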